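(* Let $B>0$ and let $y_1,y_2,y_3,y_4$ be defined for $t>0$, $x\in\mathbb{R}\setminus\{0\}$, $u=x/(Bt)^{1/4}$ by $y_{1}=(Bt)^{1/4}[\tfrac{1}{\sqrt2}z_2(u)-\tfrac{1}{2\Gamma(3/4)}z_3(u)+\tfrac{1}{6\sqrt2\Gamma(1/2)}z_4(u)]$, $y_{2}=(Bt)^{1/4}[\tfrac{1}{\Gamma(5/4)}z_1(u)-\tfrac{1}{\sqrt2}z_2(u)+\tfrac{1}{6\sqrt2\Gamma(1/2)}z_4(u)]$, $y_{3}=(Bt)^{1/4}[\tfrac{1}{\sqrt2}z_2(u)+\tfrac{1}{2\Gamma(3/4)}z_3(u)+\tfrac{1}{6\sqrt2\Gamma(1/2)}z_4(u)]$, $y_{4}=(Bt)^{1/4}[\tfrac{1}{\Gamma(5/4)}z_1(u)+\tfrac{1}{\sqrt2}z_2(u)-\tfrac{1}{6\sqrt2\Gamma(1/2)}z_4(u)]$, where $z_{1}(u)={}_{1}F_{3}(-\tfrac{1}{4};\tfrac{1}{4},\tfrac{1}{2},\tfrac{3}{4};\tfrac{u^{4}}{256})$, $z_{2}(u)=u$, $z_{3}(u)=u^{2}\,{}_{1}F_{3}(\tfrac{1}{4};\tfrac{3}{4},\tfrac{5}{4},\tfrac{3}{2};\tfrac{u^{4}}{256})$, $z_{4}(u)=u^{3}\,{}_{1}F_{3}(\tfrac{1}{2};\tfrac{5}{4},\tfrac{3}{2},\tfrac{7}{4};\tfrac{u^{4}}{256})$. Then for $t>0$, $\lim_{x\to\infty}y_3(t,x)=\infty$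 and $\lim_{x\to\infty}y_4(t,x)=-\infty$; for $x>0$, $\lim_{t\to0}y_3(t,x)=\infty$ and $\lim_{t\to0}y_4(t,x)=-\infty$. Similarly, for $t>0$, $\lim_{x\to-\infty}y_1(t,x)=\lim_{x\to-\infty}y_2(t,x)=-\infty$, and for $x>0$, $\lim_{t\to0}y_1(t,-x)=\lim_{t\to0}y_2(t,-x)=-\infty$.
   Context: ${}_{p}F_{q}(a_{1},\ldots,a_{p};b_{1},\ldots,b_{q};\nu)=\sum_{k\ge0}\frac{(a_{1})_{k}\cdots(a_{p})_{k}}{(b_{1})_{k}\cdots(b_{q})_{k}}\frac{\nu^{k}}{k!}$ is the generalized hypergeometric function, with Pochhammer symbol $(\lambda)_{k}=\lambda(\lambda+1)\cdots(\lambda+k-1)$, $(\lambda)_0=1$. $\Gamma$ is the Gamma function. *)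

(* Defs.v *)
From Stdlib Require Import Reals.
From Coquelicot Require Import Coquelicot.
Open Scope R_scope.

Fixpoint poch (a : R) (k : nat) : R :=
  match k with
  | O => 1
  | S k' => poch a k' * (a + INR k')
  end.

Definition hyp1F3 (a b1 b2 b3 nu : R) : R :=
  Series (fun k => poch a k / (poch b1 k * poch b2 k * poch b3 k)
                   * nu ^ k / INR (Factorial.fact k)).

Definition Gamma (s : R) : R :=
  RInt_gen (fun t => Rpower t (s - 1) * exp (- t))
           (at_right 0) (Rbar_locally p_infty).

Definition z1 (u : R) : R := hyp1F3 (-1/4) (1/4) (1/2) (3/4) (u ^ 4 / 256).
Definition z2 (u : R) : R := u.
Definition z3 (u : R) : R := u ^ 2 * hyp1F3 (1/4) (3/4) (5/4) (3/2) (u ^ 4 / 256).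
Definition z4 (u : R) : R := u ^ 3 * hyp1F3 (1/2) (5/4) (3/2) (7/4) (u ^ 4 / 256).

Definition scl (B t : R) : R := Rpower (B * t) (1/4).
Definition uu (B t x : R) : R := x / scl B t.

Definition y1 (B t x : R) : R :=
  scl B t * (1 / sqrt 2 * z2 (uu B t x) - 1 / (2 * Gamma (3/4)) * z3 (uu B t x)
             + 1 / (6 * sqrt 2 * Gamma (1/2)) * z4 (uu B t x)).
Definition y2 (B t x : R) : R :=
  scl B t * (1 / Gamma (5/4) * z1 (uu B t x) - 1 / sqrt 2 * z2 (uu B t x)
             + 1 / (6 * sqrt 2 * Gamma (1/2)) * z4 (uu B t x)).
Definition y3 (B t x : R) : R :=
  scl B t * (1 / sqrt 2 * z2 (uu B t x) + 1 / (2 * Gamma (3/4)) * z3 (uu B t x)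
             + 1 / (6 * sqrt 2 * Gamma (1/2)) * z4 (uu B t x)).
Definition y4 (B t x : R) : R :=
  scl B t * (1 / Gamma (5/4) * z1 (uu B t x) + 1 / sqrt 2 * z2 (uu B t x)
             - 1 / (6 * sqrt 2 * Gamma (1/2)) * z4 (uu B t x)).

(* Main.v *)
Require Import Defs.
From Stdlib Require Import Reals.
From Coquelicot Require Import Coquelicot.
From Stdlib Require Import Lra Psatz.
From Stdlib Require Classical_Prop.
Open Scope R_scope.

Lemma poch_pos b k : 0 < b -> 0 < poch b k.
Proof.
  intros Hb; induction k as [|k IH]; simpl; [lra|].
  apply Rmult_lt_0_compat; auto. pose proof (pos_INR k); lra.
Qed.

Lemma poch_bound a b1 b2 b3 M k : 0 < b1 -> 0 < b2 -> 0 < b3 -> 0 <= M ->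
  (forall j : nat, Rabs (a + INR j) <= M * ((b1 + INR j) * (b2 + INR j) * (b3 + INR j))) ->
  Rabs (poch a k) <= M ^ k * (poch b1 k * poch b2 k * poch b3 k).
Proof.
  intros H1 H2 H3 HM Hj; induction k as [|k IH]; simpl.
  - rewrite Rabs_R1; lra.
  - rewrite Rabs_mult.
    replace (M * M ^ k * (poch b1 k * (b1 + INR k) * (poch b2 k * (b2 + INR k)) * (poch b3 k * (b3 + INR k))))
      with ((M ^ k * (poch b1 k * poch b2 k * poch b3 k)) * (M * ((b1 + INR k) * (b2 + INR k) * (b3 + INR k)))) by ring.
    apply Rmult_le_compat; auto using Rabs_pos.
Qed.

Definition hterm (a b1 b2 b3 nu : R) (k : nat) : R :=
  poch a k / (poch b1 k * poch b2 k * poch b3 k) * nu ^ k / INR (Factorial.fact k).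

Lemma hterm_ex a b1 b2 b3 nu : 0 < b1 -> 0 < b2 -> 0 < b3 -> 0 <= nu ->
  (forall j : nat, Rabs (a + INR j) <= 3 * ((b1 + INR j) * (b2 + INR j) * (b3 + INR j))) ->
  ex_series (hterm a b1 b2 b3 nu).
Proof.
  intros H1 H2 H3 Hnu Hj.
  apply (@ex_series_le R_AbsRing R_CompleteNormedModule _ (fun k => (3 * nu) ^ k * / INR (Factorial.fact k))).
  - intros n. change (norm (hterm a b1 b2 b3 nu n)) with (Rabs (hterm a b1 b2 b3 nu n)).
    unfold hterm.
    pose proof (poch_pos b1 n H1). pose proof (poch_pos b2 n H2). pose proof (poch_pos b3 n H3).
    pose proof (poch_bound a b1 b2 b3 3 n H1 H2 H3 ltac:(lra) Hj) as HB.
    assert (Hf : 0 < INR (Factorial.fact n)) by (apply lt_0_INR; apply Factorial.lt_O_fact).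
    set (P := poch b1 n * poch b2 n * poch b3 n) in *.
    assert (HP : 0 < P) by (unfold P; repeat apply Rmult_lt_0_compat; auto).
    unfold Rdiv. rewrite !Rabs_mult, Rabs_inv, Rabs_inv, (Rabs_right P), (Rabs_right (INR _)), (Rabs_right (nu ^ n)) by (try apply Rle_ge, pow_le; lra).
    rewrite Rpow_mult_distr.
    apply Rmult_le_compat_r; [left; apply Rinv_0_lt_compat; lra|].
    apply Rmult_le_compat_r; [apply pow_le; lra|].
    apply (Rmult_le_reg_r P); auto. rewrite Rmult_assoc, Rinv_l by lra. lra.
  - pose proof (is_exp_Reals (3 * nu)) as He.
    eexists. unfold is_pseries in He.
    eapply is_series_ext; [|exact He]. intros n. simpl. rewrite pow_n_pow. reflexivity.
Qed.

Lemma Series_zero : Series (fun _ => 0) = 0.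
Proof.
  pose proof (Series_opp (fun _ => 0)) as H.
  simpl in H. rewrite Ropp_0 in H. lra.
Qed.

Lemma Series_nonneg (a : nat -> R) : ex_series a -> (forall n, 0 <= a n) -> 0 <= Series a.
Proof.
  intros He Ha. rewrite <- Series_zero. apply Series_le; auto. intros n; split; [lra| auto].
Qed.

Lemma Series_nonpos (a : nat -> R) : ex_series a -> (forall n, a n <= 0) -> Series a <= 0.
Proof.
  intros He Ha. rewrite <- (Ropp_involutive (Series a)), <- Series_opp.
  assert (0 <= Series (fun n => - a n)); [|lra].
  apply Series_nonneg. apply (@ex_series_opp R_AbsRing R_NormedModule a); auto. intros n; specialize (Ha n); lra.
Qed.

Lemma hyp_ge1 a b1 b2 b3 nu : 0 < a -> 0 < b1 -> 0 < b2 -> 0 < b3 -> 0 <= nu ->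
  (forall j : nat, Rabs (a + INR j) <= 3 * ((b1 + INR j) * (b2 + INR j) * (b3 + INR j))) ->
  1 <= hyp1F3 a b1 b2 b3 nu.
Proof.
  intros Ha H1 H2 H3 Hnu Hj. pose proof (hterm_ex _ _ _ _ _ H1 H2 H3 Hnu Hj) as He.
  unfold hyp1F3. fold (hterm a b1 b2 b3 nu).
  rewrite Series_incr_1 by auto.
  assert (hterm a b1 b2 b3 nu 0 = 1) as E by (unfold hterm; simpl; field).
  rewrite E. assert (0 <= Series (fun k => hterm a b1 b2 b3 nu (S k))); [|lra].
  apply Series_nonneg. apply ex_series_incr_1 in He. exact He.
  intros n. unfold hterm.
  pose proof (poch_pos b1 (S n) H1). pose proof (poch_pos b2 (S n) H2). pose proof (poch_pos b3 (S n) H3).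
  pose proof (poch_pos a (S n) Ha).
  assert (Hf : 0 < INR (Factorial.fact (S n))) by (apply lt_0_INR; apply Factorial.lt_O_fact).
  pose proof (pow_le nu (S n) Hnu).
  unfold Rdiv.
  assert (0 < / (poch b1 (S n) * poch b2 (S n) * poch b3 (S n))) by (apply Rinv_0_lt_compat; apply Rmult_lt_0_compat; [apply Rmult_lt_0_compat|]; assumption).
  assert (0 < / INR (Factorial.fact (S n))) by (apply Rinv_0_lt_compat; auto).
  set (p := poch a (S n)) in *.
  assert (0 <= p * / (poch b1 (S n) * poch b2 (S n) * poch b3 (S n))) by nra.
  apply Rmult_le_pos; [apply Rmult_le_pos|]; lra.
Qed.

Lemma poch_neg k : poch (-1/4) (S k) < 0.
Proof.
  induction k as [|k IH]; simpl in *. lra.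
  assert (0 < -1/4 + match k with 0%nat => 1 | S _ => INR k + 1 end).
  { pose proof (pos_INR k). destruct k; lra. }
  nra.
Qed.

Lemma hyp_le1 b1 b2 b3 nu : 0 < b1 -> 0 < b2 -> 0 < b3 -> 0 <= nu ->
  (forall j : nat, Rabs (-1/4 + INR j) <= 3 * ((b1 + INR j) * (b2 + INR j) * (b3 + INR j))) ->
  hyp1F3 (-1/4) b1 b2 b3 nu <= 1.
Proof.
  intros H1 H2 H3 Hnu Hj. pose proof (hterm_ex _ _ _ _ _ H1 H2 H3 Hnu Hj) as He.
  unfold hyp1F3. fold (hterm (-1/4) b1 b2 b3 nu).
  rewrite Series_incr_1 by auto.
  assert (hterm (-1/4) b1 b2 b3 nu 0 = 1) as E by (unfold hterm; simpl; field).
  rewrite E. assert (Series (fun k => hterm (-1/4) b1 b2 b3 nu (S k)) <= 0); [|lra].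
  apply Series_nonpos. apply ex_series_incr_1 in He. exact He.
  intros n. unfold hterm.
  pose proof (poch_pos b1 (S n) H1). pose proof (poch_pos b2 (S n) H2). pose proof (poch_pos b3 (S n) H3).
  pose proof (poch_neg n).
  assert (Hf : 0 < INR (Factorial.fact (S n))) by (apply lt_0_INR; apply Factorial.lt_O_fact).
  pose proof (pow_le nu (S n) Hnu).
  unfold Rdiv. 
  assert (0 < / (poch b1 (S n) * poch b2 (S n) * poch b3 (S n))) by (apply Rinv_0_lt_compat; apply Rmult_lt_0_compat; [apply Rmult_lt_0_compat|]; assumption).
  assert (0 < / INR (Factorial.fact (S n))) by (apply Rinv_0_lt_compat; auto).
  set (p := poch (-1/4) (S n)) in *. 
  assert (p * / (poch b1 (S n) * poch b2 (S n) * poch b3 (S n)) <= 0) by nra.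
  set (q := p * / (poch b1 (S n) * poch b2 (S n) * poch b3 (S n))) in *.
  assert (0 <= nu ^ S n * / INR (Factorial.fact (S n))) by (apply Rmult_le_pos; lra).
  rewrite Rmult_assoc. set (w := nu ^ S n * / INR (Factorial.fact (S n))) in *. change (q * w <= 0). nra.
Qed.


Definition gf (s t : R) : R := Rpower t (s - 1) * exp (- t).

Lemma gf_cont s t : 0 < t -> continuous (gf s) t.
Proof.
  intros Ht. apply (@ex_derive_continuous R_AbsRing R_NormedModule). unfold gf, Rpower. auto_derive. lra.
Qed.

Lemma gf_pos s t : 0 < t -> 0 < gf s t.
Proof. intros; unfold gf, Rpower. apply Rmult_lt_0_compat; apply exp_pos. Qed.

Lemma gf_ex s a b : 0 < a -> a <= b -> ex_RInt (gf s) a b.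
Proof.
  intros Ha Hab. apply (@ex_RInt_continuous R_CompleteNormedModule). intros z Hz.
  rewrite Rmin_left, Rmax_right in Hz by lra. apply gf_cont; lra.
Qed.

Lemma G_bound s b : s <= 2 -> 1 <= b -> RInt (gf s) 1 b <= 2 * exp (-1).
Proof.
  intros Hs Hb.
  set (F := fun t => - (t + 1) * exp (- t)).
  assert (HI : is_RInt (fun t => t * exp (- t)) 1 b (minus (F b) (F 1))).
  { apply (@is_RInt_derive R_CompleteNormedModule F). 
    - intros x _. unfold F. auto_derive; auto. ring.
    - intros x _. apply (@ex_derive_continuous R_AbsRing R_NormedModule). auto_derive. auto. }
  apply Rle_trans with (RInt (fun t => t * exp (- t)) 1 b).
  - apply RInt_le; auto. apply gf_ex; lra. eexists; exact HI.
    intros x Hx. unfold gf. apply Rmult_le_compat_r. left; apply exp_pos.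
    replace x with (Rpower x 1) at 2 by (apply Rpower_1; lra).
    apply Rle_Rpower; lra.
  - rewrite (is_RInt_unique _ _ _ _ HI). unfold minus, plus, opp, F; simpl.
    pose proof (exp_pos (- b)). replace (- (1)) with (-1) by ring. nra.
Qed.

Lemma H_bound s a : 0 < s -> 0 < a <= 1 -> RInt (gf s) a 1 <= / s.
Proof.
  intros Hs Ha.
  set (F := fun t => exp (s * ln t) / s).
  assert (HI : is_RInt (fun t => Rpower t (s - 1)) a 1 (minus (F 1) (F a))).
  { apply (@is_RInt_derive R_CompleteNormedModule F).
    - intros x Hx. rewrite Rmin_left, Rmax_right in Hx by lra. unfold F, Rpower.
      auto_derive. lra.
      replace ((s - 1) * ln x) with (s * ln x + - ln x) by ring.
      rewrite exp_plus, exp_Ropp, exp_ln by lra. field. split; lra.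
    - intros x Hx. rewrite Rmin_left, Rmax_right in Hx by lra.
      apply (@ex_derive_continuous R_AbsRing R_NormedModule). unfold Rpower. auto_derive. lra. }
  apply Rle_trans with (RInt (fun t => Rpower t (s - 1)) a 1).
  - apply RInt_le; try lra. apply gf_ex; lra. eexists; exact HI.
    intros x Hx. unfold gf. rewrite <- (Rmult_1_r (Rpower x (s - 1))) at 2.
    apply Rmult_le_compat_l. unfold Rpower; left; apply exp_pos.
    rewrite <- exp_0. left; apply exp_increasing; lra.
  - rewrite (is_RInt_unique _ _ _ _ HI). unfold minus, plus, opp, F; simpl.
    rewrite ln_1, Rmult_0_r, exp_0.
    pose proof (exp_pos (s * ln a)).
    assert (0 < / s) by (apply Rinv_0_lt_compat; lra).
    unfold Rdiv. rewrite Rmult_1_l. nra.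
Qed.

Lemma mono_pinfty (G : R -> R) (K : R) :
  (forall x y, 1 <= x <= y -> G x <= G y) -> (forall x, 1 <= x -> G x <= K) ->
  exists l, filterlim G (Rbar_locally p_infty) (locally l) /\ (forall x, 1 <= x -> G x <= l).
Proof.
  intros Hm Hb.
  destruct (completeness (fun v => exists x, 1 <= x /\ v = G x)) as [l [Hub Hl]].
  - exists K. intros v [x [Hx ->]]. auto.
  - exists (G 1), 1. split; [lra|auto].
  - exists l. split.
    + intros P [eps Heps].
      assert (exists x0, 1 <= x0 /\ l - eps < G x0) as [x0 [Hx0 Hgx0]].
      { apply Classical_Prop.NNPP. intros Hn. 
        assert (l <= l - eps); [|destruct eps; simpl in *; lra].
        apply Hl. intros v [x [Hx ->]]. apply Rnot_lt_le. intros Hc. apply Hn. exists x; split; auto. }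
      exists x0. intros x Hx. apply Heps.
      assert (G x <= l) by (apply Hub; exists x; split; [lra|auto]).
      assert (G x0 <= G x) by (apply Hm; lra).
      unfold ball; simpl; unfold AbsRing_ball, abs, minus, plus, opp; simpl.
      rewrite Rabs_left1 by lra. lra.
    + intros x Hx. apply Hub. exists x; split; auto.
Qed.

Lemma mono_right0 (H : R -> R) (K : R) :
  (forall x y, 0 < x <= y /\ y <= 1 -> H y <= H x) -> (forall x, 0 < x <= 1 -> H x <= K) ->
  exists l, filterlim H (at_right 0) (locally l) /\ (forall x, 0 < x <= 1 -> H x <= l).
Proof.
  intros Hm Hb.
  destruct (completeness (fun v => exists x, (0 < x <= 1) /\ v = H x)) as [l [Hub Hl]].
  - exists K. intros v [x [Hx ->]]. auto.
  - exists (H 1), 1. split; [lra|auto].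
  - exists l. split.
    + intros P [eps Heps].
      assert (exists x0, (0 < x0 <= 1) /\ l - eps < H x0) as [x0 [Hx0 Hgx0]].
      { apply Classical_Prop.NNPP. intros Hn. 
        assert (l <= l - eps); [|destruct eps; simpl in *; lra].
        apply Hl. intros v [x [Hx ->]]. apply Rnot_lt_le. intros Hc. apply Hn. exists x; split; auto. }
      assert (Hd : 0 < x0) by lra.
      exists (mkposreal x0 Hd). intros x Hx Hx0'. apply Heps.
      unfold ball in Hx; simpl in Hx; unfold AbsRing_ball, abs, minus, plus, opp in Hx; simpl in Hx.
      rewrite Ropp_0, Rplus_0_r, Rabs_right in Hx by lra.
      assert (H x <= l) by (apply Hub; exists x; split; [lra|auto]).
      assert (H x0 <= H x) by (apply Hm; lra).
      unfold ball; simpl; unfold AbsRing_ball, abs, minus, plus, opp; simpl.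
      rewrite Rabs_left1 by lra. lra.
    + intros x Hx. apply Hub. exists x; split; auto.
Qed.

Lemma Gamma_pos s : 0 < s <= 2 -> 0 < Gamma s.
Proof.
  intros Hs.
  destruct (mono_pinfty (fun b => RInt (gf s) 1 b) (2 * exp (-1))) as [l2 [Hl2 Hl2b]].
  { intros x y Hxy. rewrite <- (RInt_Chasles (gf s) 1 x y) by (apply gf_ex; lra).
    assert (0 <= RInt (gf s) x y); [|unfold plus; simpl; lra].
    apply RInt_ge_0; try lra. apply gf_ex; lra. intros z Hz; left; apply gf_pos; lra. }
  { intros x Hx; apply G_bound; lra. }
  destruct (mono_right0 (fun a => RInt (gf s) a 1) (/ s)) as [l1 [Hl1 Hl1b]].
  { intros x y Hxy. rewrite <- (RInt_Chasles (gf s) x y 1) by (apply gf_ex; lra).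
    assert (0 <= RInt (gf s) x y); [|unfold plus; simpl; lra].
    apply RInt_ge_0; try lra. apply gf_ex; lra. intros z Hz; left; apply gf_pos; lra. }
  { intros x Hx; apply H_bound; lra. }
  assert (I1 : is_RInt_gen (gf s) (at_right 0) (at_point 1) l1).
  { intros P HP. specialize (Hl1 P HP).
    apply Filter_prod with (Q := fun a => 0 < a < 1 /\ P (RInt (gf s) a 1)) (R := fun b => b = 1).
    - apply filter_and; auto. exists (mkposreal 1 Rlt_0_1). intros y Hy Hy0.
      unfold ball in Hy; simpl in Hy; unfold AbsRing_ball, abs, minus, plus, opp in Hy; simpl in Hy.
      rewrite Ropp_0, Rplus_0_r, Rabs_right in Hy by lra. lra.
    - reflexivity.
    - intros a b [Ha HPa] ->. exists (RInt (gf s) a 1). split; auto. simpl.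
      apply (@RInt_correct R_CompleteNormedModule). apply gf_ex; lra. }
  assert (I2 : is_RInt_gen (gf s) (at_point 1) (Rbar_locally p_infty) l2).
  { intros P HP. specialize (Hl2 P HP).
    apply Filter_prod with (Q := fun a => a = 1) (R := fun b => 1 < b /\ P (RInt (gf s) 1 b)).
    - reflexivity.
    - apply filter_and; auto. exists 1. auto.
    - intros a b -> [Hb HPb]. exists (RInt (gf s) 1 b). split; auto. simpl.
      apply (@RInt_correct R_CompleteNormedModule). apply gf_ex; lra. }
  pose proof (@is_RInt_gen_Chasles R_NormedModule _ _ _ _ (gf s) 1 l1 l2 I1 I2) as I.
  unfold Gamma. fold (gf s).
  rewrite (is_RInt_gen_unique _ _ I). unfold plus; simpl.
  assert (0 <= l1).
  { apply Rle_trans with (RInt (gf s) 1 1); [rewrite RInt_point; unfold zero; simpl; lra|]. apply Hl1b; lra. }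
  assert (0 < l2).
  { apply Rlt_le_trans with (RInt (gf s) 1 2); [|apply Hl2b; lra].
    apply RInt_gt_0; try lra. intros; apply gf_pos; lra. intros; apply gf_cont; lra. }
  lra.
Qed.

Lemma nu_nonneg u : 0 <= u ^ 4 / 256.
Proof. replace (u ^ 4) with ((u ^ 2) ^ 2) by ring. pose proof (pow2_ge_0 (u^2)). lra. Qed.

Definition F3 u := hyp1F3 (1/4) (3/4) (5/4) (3/2) (u ^ 4 / 256).
Definition F4 u := hyp1F3 (1/2) (5/4) (3/2) (7/4) (u ^ 4 / 256).

Lemma F3_ge1 u : 1 <= F3 u.
Proof.
  apply hyp_ge1; try lra. apply nu_nonneg.
  intros [|j]; [simpl; rewrite Rabs_right; lra|].
  rewrite S_INR. pose proof (pos_INR j). rewrite Rabs_right by lra. nra.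
Qed.

Lemma F4_ge1 u : 1 <= F4 u.
Proof.
  apply hyp_ge1; try lra. apply nu_nonneg.
  intros [|j]; [simpl; rewrite Rabs_right; lra|].
  rewrite S_INR. pose proof (pos_INR j). rewrite Rabs_right by lra. nra.
Qed.

Lemma z1_le1 u : z1 u <= 1.
Proof.
  apply hyp_le1; try lra. apply nu_nonneg.
  intros [|j]; [simpl; rewrite Rabs_left1; lra|].
  rewrite S_INR. pose proof (pos_INR j). rewrite Rabs_right by lra. nra.
Qed.

Definition r0 := 1 / sqrt 2.
Definition c3 := 1 / (2 * Gamma (3/4)).
Definition c4 := 1 / (6 * sqrt 2 * Gamma (1/2)).
Definition g0 := 1 / Gamma (5/4).

Lemma sqrt2_pos : 0 < sqrt 2.
Proof. apply sqrt_lt_R0; lra. Qed.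

Lemma r0_pos : 0 < r0.
Proof. unfold r0. pose proof sqrt2_pos. apply Rdiv_lt_0_compat; lra. Qed.
Lemma c3_pos : 0 < c3.
Proof. unfold c3. pose proof (Gamma_pos (3/4) ltac:(lra)). apply Rdiv_lt_0_compat; lra. Qed.
Lemma c4_pos : 0 < c4.
Proof. unfold c4. pose proof (Gamma_pos (1/2) ltac:(lra)). pose proof sqrt2_pos.
  apply Rdiv_lt_0_compat; [lra|]. apply Rmult_lt_0_compat; lra. Qed.
Lemma g0_pos : 0 < g0.
Proof. unfold g0. pose proof (Gamma_pos (5/4) ltac:(lra)). apply Rdiv_lt_0_compat; lra. Qed.

Lemma y3_eq B t x : y3 B t x = scl B t * (r0 * uu B t x + c3 * ((uu B t x)^2 * F3 (uu B t x)) + c4 * ((uu B t x)^3 * F4 (uu B t x))).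
Proof. reflexivity. Qed.
Lemma y4_eq B t x : y4 B t x = scl B t * (g0 * z1 (uu B t x) + r0 * uu B t x - c4 * ((uu B t x)^3 * F4 (uu B t x))).
Proof. reflexivity. Qed.
Lemma y1_eq B t x : y1 B t x = scl B t * (r0 * uu B t x - c3 * ((uu B t x)^2 * F3 (uu B t x)) + c4 * ((uu B t x)^3 * F4 (uu B t x))).
Proof. reflexivity. Qed.
Lemma y2_eq B t x : y2 B t x = scl B t * (g0 * z1 (uu B t x) - r0 * uu B t x + c4 * ((uu B t x)^3 * F4 (uu B t x))).
Proof. reflexivity. Qed.

Lemma cube_pos_bound u : 0 <= u -> u ^ 3 <= u ^ 3 * F4 u.
Proof. intros. pose proof (F4_ge1 u). pose proof (pow_le u 3 H). nra. Qed.
Lemma cube_neg_bound u : u <= 0 -> u ^ 3 * F4 u <= u ^ 3.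
Proof. intros. pose proof (F4_ge1 u). assert (u ^ 3 <= 0).
  { replace (u^3) with (- ((-u)^3)) by ring. pose proof (pow_le (-u) 3 ltac:(lra)). lra. } nra. Qed.
Lemma sq_F3 u : 0 <= u ^ 2 * F3 u.
Proof. pose proof (F3_ge1 u). pose proof (pow2_ge_0 u). nra. Qed.

Lemma B3a s u : 0 < s -> 0 <= u -> s * (r0 * u) <= s * (r0 * u + c3 * (u^2 * F3 u) + c4 * (u^3 * F4 u)).
Proof. intros. apply Rmult_le_compat_l; [lra|]. pose proof (cube_pos_bound u H0). pose proof (pow_le u 3 H0).
  pose proof (sq_F3 u). pose proof c3_pos. pose proof c4_pos. nra. Qed.
Lemma B3b s u : 0 < s -> 0 <= u -> s * (c4 * u^3) <= s * (r0 * u + c3 * (u^2 * F3 u) + c4 * (u^3 * F4 u)).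
Proof. intros. apply Rmult_le_compat_l; [lra|]. pose proof (cube_pos_bound u H0). pose proof (pow_le u 3 H0).
  pose proof (sq_F3 u). pose proof c3_pos. pose proof c4_pos. pose proof r0_pos. nra. Qed.
Lemma B4 s u : 0 < s -> 0 <= u -> s * (g0 * z1 u + r0 * u - c4 * (u^3 * F4 u)) <= s * (g0 + r0 * u - c4 * u^3).
Proof. intros. apply Rmult_le_compat_l; [lra|]. pose proof (cube_pos_bound u H0).
  pose proof (z1_le1 u). pose proof c4_pos. pose proof g0_pos. nra. Qed.
Lemma B1a s u : 0 < s -> u <= 0 -> s * (r0 * u - c3 * (u^2 * F3 u) + c4 * (u^3 * F4 u)) <= s * (r0 * u).
Proof. intros. apply Rmult_le_compat_l; [lra|]. pose proof (cube_neg_bound u H0).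
  assert (u ^ 3 <= 0).
  { replace (u^3) with (- ((-u)^3)) by ring. pose proof (pow_le (-u) 3 ltac:(lra)). lra. }
  pose proof (sq_F3 u). pose proof c3_pos. pose proof c4_pos. nra. Qed.
Lemma B1b s u : 0 < s -> u <= 0 -> s * (r0 * u - c3 * (u^2 * F3 u) + c4 * (u^3 * F4 u)) <= s * (c4 * u^3).
Proof. intros. apply Rmult_le_compat_l; [lra|]. pose proof (cube_neg_bound u H0).
  pose proof (sq_F3 u). pose proof c3_pos. pose proof c4_pos. pose proof r0_pos. nra. Qed.
Lemma B2 s u : 0 < s -> u <= 0 -> s * (g0 * z1 u - r0 * u + c4 * (u^3 * F4 u)) <= s * (g0 - r0 * u + c4 * u^3).
Proof. intros. apply Rmult_le_compat_l; [lra|]. pose proof (cube_neg_bound u H0).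
  pose proof (z1_le1 u). pose proof c4_pos. pose proof g0_pos. nra. Qed.

Lemma scl_pos B t : 0 < scl B t.
Proof. unfold scl, Rpower. apply exp_pos. Qed.

Lemma scl_pow4 B t : 0 < B * t -> scl B t ^ 4 = B * t.
Proof.
  intros H. unfold scl. rewrite <- Rpower_pow by (unfold Rpower; apply exp_pos).
  rewrite Rpower_mult. replace (1/4 * INR 4) with 1 by (simpl; field). apply Rpower_1; auto.
Qed.

Lemma s_u B t x : scl B t * uu B t x = x.
Proof. unfold uu. pose proof (scl_pos B t). field. lra. Qed.

Lemma quad A c K : 0 < c -> exists U, 0 < U /\ forall u, U < u -> A - c * u ^ 2 < K.
Proof.
  intros Hc. exists (1 + Rabs (A - K) / c). split.
  - pose proof (Rabs_pos (A - K)). assert (0 <= Rabs (A - K) / c) by (apply Rdiv_le_0_compat; lra). lra.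
  - intros u Hu. pose proof (Rle_abs (A - K)).
    assert (c * (Rabs (A - K) / c) = Rabs (A - K)) by (field; lra).
    assert (0 <= Rabs (A - K) / c) by (apply Rdiv_le_0_compat; [apply Rabs_pos|lra]).
    assert (c * u > c + Rabs (A - K)) by nra.
    assert (u > 1) by lra.
    assert (c * u ^ 2 - c * u = c * u * (u - 1)) by ring.
    assert (0 <= c * u * (u - 1)) by (apply Rmult_le_pos; [apply Rmult_le_pos|]; lra).
    lra.
Qed.

Lemma cubic g r c K : 0 < c -> exists U, 0 <= U /\ forall u, U < u -> g + r * u - c * u ^ 3 < K.
Proof.
  intros Hc. destruct (quad (Rabs r + Rabs (g - K) + 1) c 0 Hc) as [U0 [HU0 HU]].
  exists (Rmax U0 1). split. pose proof (Rmax_r U0 1); lra.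
  intros u Hu. pose proof (Rmax_l U0 1). pose proof (Rmax_r U0 1).
  specialize (HU u ltac:(lra)).
  pose proof (Rle_abs r). pose proof (Rle_abs (g - K)). pose proof (Rabs_pos r).
  assert (c * u ^ 3 = u * (c * u ^ 2)) by ring.
  assert (u * (c * u ^ 2) >= u * (Rabs r + Rabs (g - K) + 1)) by (apply Rle_ge, Rmult_le_compat_l; lra).
  assert (r * u <= Rabs r * u) by (apply Rmult_le_compat_r; lra).
  assert (u * (Rabs (g - K) + 1) >= 1 * (Rabs (g - K) + 1)) by (apply Rle_ge, Rmult_le_compat_r; pose proof (Rabs_pos (g - K)); lra).
  lra.
Qed.

Lemma ev_scl B (HB : 0 < B) eta : 0 < eta -> at_right 0 (fun t => scl B t < eta).
Proof.
  intros He. assert (Hd : 0 < eta ^ 4 / B) by (apply Rdiv_lt_0_compat; [apply pow_lt|]; lra).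
  exists (mkposreal _ Hd). intros y Hy Hy0.
  unfold ball in Hy; simpl in Hy; unfold AbsRing_ball, abs, minus, plus, opp in Hy; simpl in Hy.
  rewrite Ropp_0, Rplus_0_r, Rabs_right in Hy by lra.
  apply Rnot_le_lt. intros Hc.
  pose proof (pow_incr eta (scl B y) 4 ltac:(lra)).
  rewrite scl_pow4 in H by (apply Rmult_lt_0_compat; lra).
  assert (B * y < eta ^ 4).
  { apply (Rmult_lt_compat_l B) in Hy; auto. replace (B * (eta * (eta * (eta * (eta * 1))) / B)) with (eta ^ 4) in Hy by (simpl; field; lra). exact Hy. }
  lra.
Qed.

Lemma uu_nonneg B t x : 0 <= x -> 0 <= uu B t x.
Proof. intros. unfold uu. apply Rdiv_le_0_compat; auto. apply scl_pos. Qed.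
Lemma uu_nonpos B t x : x <= 0 -> uu B t x <= 0.
Proof. intros. unfold uu. pose proof (scl_pos B t). unfold Rdiv.
  pose proof (Rinv_0_lt_compat _ H0). nra. Qed.

Lemma limA3 B t : is_lim (fun x => y3 B t x) p_infty p_infty.
Proof.
  intros P [M HM]. pose proof r0_pos.
  exists (Rmax 0 (M / r0)). intros x Hx. apply HM.
  pose proof (Rmax_l 0 (M / r0)). pose proof (Rmax_r 0 (M / r0)).
  rewrite y3_eq. eapply Rlt_le_trans; [|apply B3a; [apply scl_pos|apply uu_nonneg; lra]].
  replace (scl B t * (r0 * uu B t x)) with (r0 * (scl B t * uu B t x)) by ring. rewrite s_u.
  replace M with (r0 * (M / r0)) by (field; lra). apply Rmult_lt_compat_l; lra.
Qed.

Lemma limA1 B t : is_lim (fun x => y1 B t x) m_infty m_infty.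
Proof.
  intros P [M HM]. pose proof r0_pos.
  exists (Rmin 0 (M / r0)). intros x Hx. apply HM.
  pose proof (Rmin_l 0 (M / r0)). pose proof (Rmin_r 0 (M / r0)).
  rewrite y1_eq. eapply Rle_lt_trans; [apply B1a; [apply scl_pos|apply uu_nonpos; lra]|].
  replace (scl B t * (r0 * uu B t x)) with (r0 * (scl B t * uu B t x)) by ring. rewrite s_u.
  replace M with (r0 * (M / r0)) by (field; lra). apply Rmult_lt_compat_l; lra.
Qed.

Lemma limA4 B t : is_lim (fun x => y4 B t x) p_infty m_infty.
Proof.
  intros P [M HM]. pose proof c4_pos. set (s := scl B t). assert (Hs : 0 < s) by apply scl_pos.
  destruct (cubic g0 r0 c4 (M / s) H) as [U [HU0 HU]].
  exists (U * s). intros x Hx. apply HM.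
  assert (Hu : U < uu B t x).
  { unfold uu. fold s. apply (Rmult_lt_reg_r s); auto. unfold Rdiv. rewrite Rmult_assoc, Rinv_l by lra. lra. }
  rewrite y4_eq. fold s. eapply Rle_lt_trans; [apply B4; [auto|lra]|].
  specialize (HU _ Hu). apply (Rmult_lt_compat_l s) in HU; auto.
  replace (s * (M / s)) with M in HU by (field; lra). exact HU.
Qed.

Lemma limA2 B t : is_lim (fun x => y2 B t x) m_infty m_infty.
Proof.
  intros P [M HM]. pose proof c4_pos. set (s := scl B t). assert (Hs : 0 < s) by apply scl_pos.
  destruct (cubic g0 r0 c4 (M / s) H) as [U [HU0 HU]].
  exists (- U * s). intros x Hx. apply HM.
  assert (Hu : U < - uu B t x).
  { unfold uu. fold s. apply (Rmult_lt_reg_r s); auto. unfold Rdiv. 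
    replace (- (x * / s) * s) with (- x * (/ s * s)) by ring. rewrite Rinv_l by lra. lra. }
  rewrite y2_eq. fold s. eapply Rle_lt_trans; [apply B2; [auto|lra]|].
  specialize (HU _ Hu). apply (Rmult_lt_compat_l s) in HU; auto.
  replace (s * (M / s)) with M in HU by (field; lra).
  replace (g0 - r0 * uu B t x + c4 * uu B t x ^ 3) with (g0 + r0 * - uu B t x - c4 * (- uu B t x) ^ 3) by ring.
  exact HU.
Qed.

Lemma v_big s x U : 0 < s -> 0 < U -> 0 < x -> s < x / U -> U < x / s.
Proof.
  intros Hs HU Hx H. apply (Rmult_lt_reg_r s); auto. unfold Rdiv. rewrite Rmult_assoc, Rinv_l by lra.
  apply (Rmult_lt_compat_l U) in H; auto. replace (U * (x / U)) with x in H by (field; lra). lra.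
Qed.

Lemma uu_neg B t x : uu B t (- x) = - (x / scl B t).
Proof. unfold uu. pose proof (scl_pos B t). field. lra. Qed.

Lemma limC3 B (HB : 0 < B) x : 0 < x -> filterlim (fun t => y3 B t x) (at_right 0) (Rbar_locally p_infty).
Proof.
  intros Hx P [M HM]. pose proof c4_pos.
  destruct (quad 0 (c4 * x) (- M) ltac:(apply Rmult_lt_0_compat; lra)) as [U [HU0 HU]].
  assert (0 < x / U) by (apply Rdiv_lt_0_compat; lra).
  apply (filter_imp (fun t => scl B t < x / U) (fun t => P (y3 B t x))); [|apply ev_scl; auto].
  intros t Ht. apply HM. set (s := scl B t) in *. assert (Hs : 0 < s) by apply scl_pos.
  assert (Hu : U < x / s) by (apply v_big; auto).
  rewrite y3_eq. fold s. eapply Rlt_le_trans; [|apply B3b; [auto|apply uu_nonneg; lra]].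
  specialize (HU _ Hu). unfold uu; fold s.
  replace (s * (c4 * (x / s) ^ 3)) with (c4 * x * (x / s) ^ 2) by (field; lra). lra.
Qed.

Lemma limC4 B (HB : 0 < B) x : 0 < x -> filterlim (fun t => y4 B t x) (at_right 0) (Rbar_locally m_infty).
Proof.
  intros Hx P [M HM]. pose proof c4_pos. pose proof g0_pos.
  destruct (quad (g0 + r0 * x) (c4 * x) M ltac:(apply Rmult_lt_0_compat; lra)) as [U [HU0 HU]].
  assert (0 < x / U) by (apply Rdiv_lt_0_compat; lra).
  apply (filter_imp (fun t => scl B t < Rmin 1 (x / U)) (fun t => P (y4 B t x))); [|apply ev_scl; auto; apply Rmin_glb_lt; lra].
  intros t Ht. apply HM. set (s := scl B t) in *. assert (Hs : 0 < s) by apply scl_pos.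
  pose proof (Rmin_l 1 (x / U)). pose proof (Rmin_r 1 (x / U)).
  assert (Hu : U < x / s) by (apply v_big; auto; lra).
  rewrite y4_eq. fold s. eapply Rle_lt_trans; [apply B4; [auto|apply uu_nonneg; lra]|].
  specialize (HU _ Hu). unfold uu; fold s.
  replace (s * (g0 + r0 * (x / s) - c4 * (x / s) ^ 3)) with (s * g0 + r0 * x - c4 * x * (x / s) ^ 2) by (field; lra).
  assert (s * g0 <= g0) by nra. lra.
Qed.

Lemma limC1 B (HB : 0 < B) x : 0 < x -> filterlim (fun t => y1 B t (- x)) (at_right 0) (Rbar_locally m_infty).
Proof.
  intros Hx P [M HM]. pose proof c4_pos.
  destruct (quad 0 (c4 * x) M ltac:(apply Rmult_lt_0_compat; lra)) as [U [HU0 HU]].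
  assert (0 < x / U) by (apply Rdiv_lt_0_compat; lra).
  apply (filter_imp (fun t => scl B t < x / U) (fun t => P (y1 B t (- x)))); [|apply ev_scl; auto].
  intros t Ht. apply HM. set (s := scl B t) in *. assert (Hs : 0 < s) by apply scl_pos.
  assert (Hu : U < x / s) by (apply v_big; auto).
  rewrite y1_eq. fold s. eapply Rle_lt_trans; [apply B1b; [auto|apply uu_nonpos; lra]|].
  specialize (HU _ Hu). rewrite uu_neg; fold s.
  replace (s * (c4 * (- (x / s)) ^ 3)) with (0 - c4 * x * (x / s) ^ 2) by (field; lra). lra.
Qed.

Lemma limC2 B (HB : 0 < B) x : 0 < x -> filterlim (fun t => y2 B t (- x)) (at_right 0) (Rbar_locally m_infty).
Proof.
  intros Hx P [M HM]. pose proof c4_pos. pose proof g0_pos.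
  destruct (quad (g0 + r0 * x) (c4 * x) M ltac:(apply Rmult_lt_0_compat; lra)) as [U [HU0 HU]].
  assert (0 < x / U) by (apply Rdiv_lt_0_compat; lra).
  apply (filter_imp (fun t => scl B t < Rmin 1 (x / U)) (fun t => P (y2 B t (- x)))); [|apply ev_scl; auto; apply Rmin_glb_lt; lra].
  intros t Ht. apply HM. set (s := scl B t) in *. assert (Hs : 0 < s) by apply scl_pos.
  pose proof (Rmin_l 1 (x / U)). pose proof (Rmin_r 1 (x / U)).
  assert (Hu : U < x / s) by (apply v_big; auto; lra).
  rewrite y2_eq. fold s. eapply Rle_lt_trans; [apply B2; [auto|apply uu_nonpos; lra]|].
  specialize (HU _ Hu). rewrite uu_neg; fold s.
  replace (s * (g0 - r0 * - (x / s) + c4 * (- (x / s)) ^ 3)) with (s * g0 + r0 * x - c4 * x * (x / s) ^ 2) by (field; lra).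
  assert (s * g0 <= g0) by nra. lra.
Qed.

Theorem lemma2 (B : R) (HB : 0 < B) :
  (forall t : R, 0 < t ->
     is_lim (fun x => y3 B t x) p_infty p_infty /\
     is_lim (fun x => y4 B t x) p_infty m_infty /\
     is_lim (fun x => y1 B t x) m_infty m_infty /\
     is_lim (fun x => y2 B t x) m_infty m_infty) /\
  (forall x : R, 0 < x ->
     filterlim (fun t => y3 B t x) (at_right 0) (Rbar_locally p_infty) /\
     filterlim (fun t => y4 B t x) (at_right 0) (Rbar_locally m_infty) /\
     filterlim (fun t => y1 B t (- x)) (at_right 0) (Rbar_locally m_infty) /\
     filterlim (fun t => y2 B t (- x)) (at_right 0) (Rbar_locally m_infty)).
Proof.
  split.
  - intros t _. split; [apply limA3|split; [apply limA4|split; [apply limA1|apply limA2]]].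
  - intros x Hx. split; [apply limC3|split; [apply limC4|split; [apply limC1|apply limC2]]]; auto.
Qed.
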